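(* Let $A$ be a finite-dimensional local $k$-algebra with $A/J_A\cong k$, $X$ a finite-dimensional $(A,k)$-bimodule (with central $k$-action), and $\Lambda:=\begin{pmatrix}A&X\\0&k\end{pmatrix}$. Assume $(1,-1)\in K_0(\operatorname{proj}\Lambda)$ is rigid. (a) There exists $h\in X$ with $X=Ah$. (b) Let $\Lambda':=\begin{pmatrix}A&J_AX\\0&k\end{pmatrix}$ and $t\ge1$. If $(1,-t)\in K_0(\operatorname{proj}\Lambda)$ is rigid, then $(1,1-t)\in K_0(\operatorname{proj}\Lambda')$ is rigid.
   Context: $k$ a field, $J_A$ the Jacobson radical. $K_0(\operatorname{proj}\Lambda)$ is identified with $\mathbb{Z}^2$ via $[A\ X]\mapsto(1,0)$, $[0\ k]\mapsto(0,1)$ (similarly for $\Lambda'$). An element of $K_0(\operatorname{proj}\Lambda)$ is rigid if it equals the $g$-vector $[T^0]-[T^{-1}]$ of some 2-term presilting complex $T$ in $K^b(\operatorname{proj}\Lambda)$ (concentrated in degrees $-1,0$ with $\operatorname{Hom}(T,T[\ell])=0$ for all $\ell>0$). *)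

(* Defs.v *)
From HB Require Import structures.
From mathcomp Require Import all_boot all_order all_algebra all_field.
Set Implicit Arguments. Unset Strict Implicit. Unset Printing Implicit Defensive.
Import GRing.Theory.
Local Open Scope ring_scope.

Definition jac (k : fieldType) (A : falgType k) (x : A) : Prop :=
  forall a : A, (1 - a * x) \is a GRing.unit.

(* A is local with A / J_A = k : 1 is not in J_A (J_A proper) and the
   structure map k -> A / J_A is onto, i.e. A = k 1 + J_A. *)
Definition local_res_field (k : fieldType) (A : falgType k) : Prop :=
  ~ jac (1 : A) /\ forall a : A, exists c : k, jac (a - c%:A).

(* A finite-dimensional (A,k)-bimodule with central k-action:
   X is a finite-dimensional k-space (vectType), with a left A-action that is
   k-bilinear; the right k-action is the scalar action of X. *)
Record bimod (k : fieldType) (A : falgType k) (X : vectType k) := Bimod {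
  act : A -> X -> X;
  act1 : forall x, act 1 x = x;
  actM : forall a b x, act (a * b) x = act a (act b x);
  actDl : forall a b x, act (a + b) x = act a x + act b x;
  actDr : forall a x y, act a (x + y) = act a x + act a y;
  actZl : forall (c : k) a x, act (c *: a) x = c *: act a x;
  actZr : forall (c : k) a x, act a (c *: x) = c *: act a x
}.

Definition JX (k : fieldType) (A : falgType k) (X : vectType k) (M : bimod A X)
  (x : X) : Prop :=
  exists s : seq (A * X), (forall p, p \in s -> jac p.1) /\
    x = \sum_(p <- s) act M p.1 p.2.

Section Tri.
Variables (k : fieldType) (A : falgType k) (X : vectType k) (M : bimod A X).

(* Triangular algebra Lambda_V = [[A, V],[0, k]] for an A-k-sub-bimodule V of X
   (given by its membership predicate).  Indecomposable projective right
   modules: P1 = e1 Lambda = [A V], P2 = e2 Lambda = [0 k], with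
   Hom(P1,P1)=A, Hom(P2,P1)=V, Hom(P1,P2)=0, Hom(P2,P2)=k.
   A morphism P1^m (+) P2^n -> P1^m' (+) P2^n' is a block matrix. *)
Record hom (m n m' n' : nat) := Hom {
  hA : 'M[A]_(m', m);
  hX : 'M[X]_(m', n);
  hK : 'M[k]_(n', n)
}.

Definition hom_in (V : X -> Prop) m n m' n' (f : hom m n m' n') : Prop :=
  forall i j, V (hX f i j).

Definition hcomp m n m' n' m'' n'' (g : hom m' n' m'' n'') (f : hom m n m' n')
  : hom m n m'' n'' :=
  Hom (hA g *m hA f)
      (\matrix_(i, j) (\sum_(l < m') act M (hA g i l) (hX f l j)
                       + \sum_(l < n') hK f l j *: hX g i l))
      (hK g *m hK f).

Definition hadd m n m' n' (f g : hom m n m' n') : hom m n m' n' :=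
  Hom (hA f + hA g) (\matrix_(i, j) (hX f i j + hX g i j)) (hK f + hK g).

(* The 2-term complex T = (T^-1 --d--> T^0), T^-1 = P1^c (+) P2^d,
   T^0 = P1^a (+) P2^b, is presilting iff Hom_K(T, T[1]) = 0, i.e. every
   f : T^-1 -> T^0 is null-homotopic: f = d h1 + h0 d  (Hom(T,T[l]) = 0
   automatically for l >= 2). *)
Definition presilting (V : X -> Prop) a b c d (dT : hom c d a b) : Prop :=
  hom_in V dT /\
  forall f : hom c d a b, hom_in V f ->
    exists (h1 : hom c d c d) (h0 : hom a b a b),
      hom_in V h1 /\ hom_in V h0 /\
      f = hadd (hcomp dT h1) (hcomp h0 dT).

(* (e1, e2) in K_0(proj Lambda_V) = Z^2 is rigid iff it is the g-vector
   [T^0] - [T^-1] of a 2-term presilting complex. *)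
Definition rigid (V : X -> Prop) (e1 e2 : int) : Prop :=
  exists (a b c d : nat) (dT : hom c d a b),
    (a%:Z - c%:Z = e1) /\ (b%:Z - d%:Z = e2) /\ presilting V dT.

End Tri.

(* Main.v *)
Require Import Defs.
From HB Require Import structures.
From mathcomp Require Import all_boot all_order all_algebra all_field.
From Stdlib Require Import ClassicalEpsilon Classical.
Set Implicit Arguments. Unset Strict Implicit. Unset Printing Implicit Defensive.
Import GRing.Theory.
Local Open Scope ring_scope.

Section Jac.
Variables (k : fieldType) (A : falgType k).

Lemma unit_1sub (y z : A) : (1 - z * y) \is a GRing.unit -> (1 - y * z) \is a GRing.unit.
Proof.
move/unitrP=> [w [Hw1 Hw2]]; apply/unitrP; exists (1 + y * w * z); split.
- have E : y * w * z * (1 - y * z) = y * z.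
    rewrite -!mulrA; congr (_ * _).
    have -> : z * (1 - y * z) = (1 - z * y) * z by rewrite mulrBr mulrBl mulr1 mul1r mulrA.
    by rewrite mulrA Hw1 mul1r.
  by rewrite mulrDl mul1r E subrK.
- have E : (1 - y * z) * (y * w * z) = y * z.
    have H1 : (1 - y * z) * y = y * (1 - z * y) by rewrite mulrBr mulrBl mulr1 mul1r mulrA.
    by rewrite !mulrA H1 -(mulrA y) Hw2 mulr1.
  by rewrite mulrDr mulr1 E subrK.
Qed.

Lemma jac0 : jac (0 : A).
Proof. by move=> a; rewrite mulr0 subr0 unitr1. Qed.

Lemma jacD (x y : A) : jac x -> jac y -> jac (x + y).
Proof.
move=> Hx Hy a; have Hu := Hx a.
have -> : 1 - a * (x + y) = (1 - a * x) * (1 - ((1 - a * x)^-1 * a) * y).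
  by rewrite mulrBr mulr1 !mulrA divrr // mul1r mulrDr opprD addrA.
by rewrite unitrMr.
Qed.

Lemma jacMl (b x : A) : jac x -> jac (b * x).
Proof. by move=> Hx a; rewrite mulrA. Qed.

Lemma jacMr (x b : A) : jac x -> jac (x * b).
Proof. by move=> Hx a; rewrite mulrA; apply: unit_1sub; rewrite mulrA. Qed.

Lemma jacZ (c : k) (x : A) : jac x -> jac (c *: x).
Proof. by move=> Hx a; rewrite -scalerAr scalerAl. Qed.

Lemma jacN (x : A) : jac x -> jac (- x).
Proof. by move=> Hx a; rewrite mulrN -mulNr. Qed.

Lemma jacB (x y : A) : jac x -> jac y -> jac (x - y).
Proof. by move=> Hx Hy; apply: jacD => //; apply: jacN. Qed.

Lemma jac_sum (I : Type) (r : seq I) (F : I -> A) :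
  (forall i, jac (F i)) -> jac (\sum_(i <- r) F i).
Proof. by move=> H; elim/big_ind: _ => //; [exact: jac0 | exact: jacD]. Qed.

Lemma jac_unit (j : A) : jac j -> (1 - j) \is a GRing.unit.
Proof. by move=> Hj; have := Hj 1; rewrite mul1r. Qed.

End Jac.
Section Phi.
Variables (k : fieldType) (A : falgType k) (Hloc : local_res_field A).

Definition phi (a : A) : k :=
  proj1_sig (constructive_indefinite_description _ (proj2 Hloc a)).

Lemma phiP a : jac (a - (phi a)%:A).
Proof. by rewrite /phi; case: constructive_indefinite_description. Qed.

Lemma phi_uniq a c : jac (a - c%:A) -> phi a = c.
Proof.
move=> H; apply/eqP; apply/negPn/negP => Hne.
have H2 := jacB H (phiP a).
have E : a - c%:A - (a - (phi a)%:A) = (phi a - c) *: 1.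
  by rewrite opprB addrC addrA subrK scalerBl.
rewrite E in H2; have H3 := jacZ ((phi a - c)^-1) H2.
rewrite scalerA mulVf ?scale1r in H3; last by rewrite subr_eq0.
by case: Hloc => H1 _; apply: H1.
Qed.

Lemma phi_alg c : phi (c%:A) = c.
Proof. by apply: phi_uniq; rewrite subrr; exact: jac0. Qed.

Lemma phi1 : phi 1 = 1.
Proof. by rewrite -(scale1r (1 : A)) phi_alg. Qed.

Lemma phi0 : phi 0 = 0.
Proof. by rewrite -(scale0r (1 : A)) phi_alg. Qed.

Lemma phiD a b : phi (a + b) = phi a + phi b.
Proof.
apply: phi_uniq; have := jacD (phiP a) (phiP b).
by rewrite scalerDl opprD addrACA.
Qed.

Lemma phiN a : phi (- a) = - phi a.
Proof.
apply: phi_uniq; have := jacN (phiP a).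
by rewrite opprB scaleNr opprK addrC.
Qed.

Lemma phiB a b : phi (a - b) = phi a - phi b.
Proof. by rewrite phiD phiN. Qed.

Lemma phiZ c a : phi (c *: a) = c * phi a.
Proof.
apply: phi_uniq; have := jacZ c (phiP a).
by rewrite scalerBr scalerA.
Qed.

Lemma phiM a b : phi (a * b) = phi a * phi b.
Proof.
apply: phi_uniq.
have := jacD (jacMr b (phiP a)) (jacZ (phi a) (phiP b)).
rewrite mulrBl scalerBr scalerA -scalerAl mul1r addrA subrK.
by [].
Qed.

Lemma phi_sum (I : Type) (r : seq I) (F : I -> A) :
  phi (\sum_(i <- r) F i) = \sum_(i <- r) phi (F i).
Proof. exact: (big_morph phi phiD phi0). Qed.

Lemma phi_jac j : jac j -> phi j = 0.
Proof. by move=> H; apply: phi_uniq; rewrite scale0r subr0. Qed.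

Lemma jac_phi0 a : phi a = 0 -> jac a.
Proof. by move=> H; have := phiP a; rewrite H scale0r subr0. Qed.

Lemma phi_unit a : phi a != 0 -> a \is a GRing.unit.
Proof.
move=> Hne; set c := phi a; set j := a - c%:A.
have Ej : a = c%:A * (1 - ((- c^-1) *: 1) * j).
  rewrite mulrBr mulr1 mulrA -scalerAl mul1r scalerA mulrN divff // scaleN1r.
  by rewrite mulN1r opprK /j addrC subrK.
have Hu : (1 - ((- c^-1) *: 1) * j) \is a GRing.unit by apply: (phiP a).
rewrite Ej unitrMr //; apply/unitrP; exists (c^-1%:A).
by rewrite -!scalerAl !mul1r !scalerA mulVf // divff // scale1r.
Qed.

Lemma phi_inv a : a \is a GRing.unit -> phi (a^-1) = (phi a)^-1.
Proof.
move=> Hu; have := phiM a a^-1; rewrite divrr // phi1 => H.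
have Hne : phi a != 0 by apply/eqP => H0; move: H; rewrite H0 mul0r; apply/eqP; exact: oner_neq0.
by rewrite -[phi a^-1]mul1r -(mulVf Hne) -mulrA -H mulr1.
Qed.

End Phi.
Section Act.
Variables (k : fieldType) (A : falgType k) (X : vectType k) (M : bimod A X).
Local Notation act := (act M).

Lemma act0r a : act a 0 = 0.
Proof. by have := actZr M 0 a 0; rewrite !scale0r. Qed.
Lemma act0l x : act 0 x = 0.
Proof. by have := actZl M 0 0 x; rewrite !scale0r. Qed.
Lemma actNr a x : act a (- x) = - act a x.
Proof. by rewrite -scaleN1r actZr scaleN1r. Qed.
Lemma actNl a x : act (- a) x = - act a x.
Proof. by rewrite -scaleN1r actZl scaleN1r. Qed.
Lemma actBr a x y : act a (x - y) = act a x - act a y.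
Proof. by rewrite actDr actNr. Qed.
Lemma actBl a b x : act (a - b) x = act a x - act b x.
Proof. by rewrite actDl actNl. Qed.
Lemma act_sumr a (I : Type) (r : seq I) (F : I -> X) :
  act a (\sum_(i <- r) F i) = \sum_(i <- r) act a (F i).
Proof. exact: (big_morph (act a) (actDr M a) (act0r a)). Qed.
Lemma act_suml x (I : Type) (r : seq I) (F : I -> A) :
  act (\sum_(i <- r) F i) x = \sum_(i <- r) act (F i) x.
Proof. exact: (big_morph (act^~ x) (fun a b => actDl M a b x) (act0l x)). Qed.
Lemma act_alg c x : act (c%:A) x = c *: x.
Proof. by rewrite actZl act1. Qed.

Lemma JX0 : JX M 0.
Proof. by exists [::]; split => //; rewrite big_nil. Qed.
Lemma JXD x y : JX M x -> JX M y -> JX M (x + y).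
Proof.
move=> [s [Hs ->]] [s' [Hs' ->]]; exists (s ++ s'); split; last by rewrite big_cat.
by move=> p; rewrite mem_cat => /orP [/Hs|/Hs'].
Qed.
Lemma JXact a x : JX M x -> JX M (act a x).
Proof.
move=> [s [Hs ->]]; exists [seq (a * p.1, p.2) | p <- s]; split.
  by move=> p /mapP [q /Hs Hq ->]; apply: jacMl.
by rewrite act_sumr big_map; apply: eq_bigr => p _; rewrite actM.
Qed.
Lemma JXZ c x : JX M x -> JX M (c *: x).
Proof. by move=> H; rewrite -act_alg; apply: JXact. Qed.
Lemma JXN x : JX M x -> JX M (- x).
Proof. by move=> H; rewrite -scaleN1r; apply: JXZ. Qed.
Lemma JXB x y : JX M x -> JX M y -> JX M (x - y).
Proof. by move=> Hx Hy; apply: JXD => //; apply: JXN. Qed.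
Lemma JX_sum (I : Type) (r : seq I) (F : I -> X) :
  (forall i, JX M (F i)) -> JX M (\sum_(i <- r) F i).
Proof. by move=> H; elim/big_ind: _ => //; [exact: JX0 | exact: JXD]. Qed.
Lemma JX_single j x : jac j -> JX M (act j x).
Proof. by move=> Hj; exists [:: (j, x)]; split; [move=> p; rewrite inE => /eqP -> | rewrite big_seq1]. Qed.

Lemma JX_cyclic h x : (forall y, exists a, y = act a h) -> JX M x ->
  exists j, jac j /\ x = act j h.
Proof.
move=> Hh [s [Hs ->]].
have [g Hg] : exists g : A * X -> A, forall p, p.2 = act (g p) h.
  exists (fun p => proj1_sig (constructive_indefinite_description _ (Hh p.2))).
  by move=> p; case: constructive_indefinite_description.
exists (\sum_(p <- s) p.1 * g p); split.
  by rewrite big_seq; elim/big_ind: _ => [|u v|p /Hs H]; [exact: jac0|exact: jacD|exact: jacMr].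
by rewrite act_suml; apply: eq_bigr => p _; rewrite actM -Hg.
Qed.

End Act.
Section FieldLemma.
Variable k : fieldType.

Lemma delta_sandwich m n (u : 'rV[k]_m) (w : 'cV[k]_n) i j :
  (u *m delta_mx i j *m w) 0 0 = u 0 i * w j 0.
Proof.
rewrite !mxE (bigD1 j) //= big1 ?addr0; last first.
  move=> l /negbTE Hl; rewrite !mxE big1 ?mul0r // => r _.
  by rewrite mxE Hl andbF mulr0.
rewrite !mxE (bigD1 i) //= big1 ?addr0; last first.
  by move=> r /negbTE Hr; rewrite mxE Hr mulr0.
by rewrite mxE !eqxx mulr1.
Qed.

Lemma nogap m n (Mk : 'M[k]_(m,n)) (u : 'rV_m) (w : 'cV_n) :
  u *m Mk = 0 -> Mk *m w = 0 ->
  (forall i j, exists (P : 'M_n) (Q : 'M_m), delta_mx i j = Mk *m P + Q *m Mk) ->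
  u = 0 \/ w = 0.
Proof.
move=> Hu Hw H; case: (eqVneq u 0) => [->|/matrix0Pn [i0 [i Hi]]]; [by left|right].
apply/eqP/negPn/negP => /matrix0Pn [j [j0 Hj]].
have [P [Q E]] := H i j.
have : u *m delta_mx i j *m w = 0.
  by rewrite E mulmxDr mulmxDl !mulmxA Hu !mul0mx add0r -!mulmxA Hw !mulmx0.
move/matrixP => /(_ 0 0); rewrite delta_sandwich mxE.
move: Hi Hj; rewrite (ord1 i0) (ord1 j0) => Hi Hj.
by move/eqP; rewrite mulf_eq0 (negbTE Hi) (negbTE Hj).
Qed.

End FieldLemma.
From mathcomp Require Import ring.
Section Annih.
Variables (k : fieldType) (A : falgType k) (Hloc : local_res_field A).
Local Notation phi := (phi Hloc).

Lemma split_sum_at (R : nmodType) n (i0 : 'I_n.+1) (F : 'I_n.+1 -> R) :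
  \sum_(i < n.+1) F i = F i0 + \sum_(i < n) F (lift i0 i).
Proof. by rewrite (bigD1_ord i0) //=. Qed.

Lemma annih (c : nat) (al : 'M[A]_(c.+1, c)) :
  (forall w : 'cV[k]_c, map_mx phi al *m w = 0 -> w = 0) ->
  exists (u : 'rV[A]_(c.+1)) (i0 : 'I_c.+1),
    u 0 i0 \is a GRing.unit /\ u *m al = 0 /\
    forall w : 'rV[A]_(c.+1), w *m al = 0 -> exists mu : A, forall i, w 0 i = mu * u 0 i.
Proof.
elim: c al => [|c IH] al Hal.
  exists (const_mx 1), 0; split; first by rewrite mxE unitr1.
  split; first by rewrite thinmx0.
  move=> w _; exists (w 0 0) => i; by rewrite (ord1 i) mxE mulr1.
have [i0 Hi0] : exists i0, phi (al i0 0) != 0.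
  case: (pickP (fun i => phi (al i 0) != 0)) => [i Hi|H0]; first by exists i.
  have Hw := Hal (delta_mx 0 0); exfalso; have: (delta_mx 0 0 : 'cV[k]_c.+1) = 0.
    apply: Hw; apply/matrixP => i j; rewrite (ord1 j) !mxE big_ord_recl big1 ?addr0.
      by rewrite !mxE !eqxx mulr1; move: (H0 i) => /= /negbFE /eqP.
    by move=> l _; rewrite !mxE eqxx andbT [lift _ _ == _]eq_sym (negbTE (neq_lift _ _)) mulr0.
  by move/matrixP => /(_ 0 0); rewrite !mxE !eqxx /=; apply/eqP; exact: oner_neq0.
set p := al i0 0.
have Hp : p \is a GRing.unit by apply: phi_unit.
set al' : 'M[A]_(c.+1, c) := \matrix_(i, j)
  (al (lift i0 i) (lift 0 j) - al (lift i0 i) 0 * p^-1 * al i0 (lift 0 j)).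
have Hal' : forall w : 'cV[k]_c, map_mx phi al' *m w = 0 -> w = 0.
  move=> w' Hw'.
  set S := \sum_(j' < c) phi (al i0 (lift 0 j')) * w' j' 0.
  set w : 'cV[k]_(c.+1) := \col_j (if unlift 0 j is Some j' then w' j' 0
                                    else - (phi p)^-1 * S).
  have Ew1 : forall j', w (lift 0 j') 0 = w' j' 0 by move=> j'; rewrite mxE liftK.
  have Ew0 : w 0 0 = - (phi p)^-1 * S by rewrite mxE unlift_none.
  have Hw : map_mx phi al *m w = 0.
    apply/matrixP => i z; rewrite (ord1 z) !mxE big_ord_recl mxE Ew0.
    under eq_bigr do rewrite mxE Ew1.
    case: (unliftP i0 i) => [i'|] ->.
      have E : \sum_j phi (al (lift i0 i') (lift 0 j)) * w' j 0
               - phi (al (lift i0 i') 0) * (phi p)^-1 * S = 0.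
        move/matrixP: Hw' => /(_ i' 0); rewrite !mxE => E; rewrite -[RHS]E.
        rewrite /S mulr_sumr -sumrB; apply: eq_bigr => j _.
        by rewrite !mxE phiB !phiM phi_inv // mulrBl !mulrA.
      rewrite -[RHS]E; ring.
    rewrite /S -/p mulrA mulrN divff ?mulN1r ?addNr //.
  have := Hal _ Hw => /matrixP H; apply/matrixP => j' z.
  by rewrite (ord1 z) -Ew1 H !mxE.
have [u' [i0' [Hu' [Hu'al Hu'ann]]]] := IH al' Hal'.
set u : 'rV[A]_(c.+2) := \row_i (if unlift i0 i is Some i' then u' 0 i' else
   - \sum_(i' < c.+1) u' 0 i' * al (lift i0 i') 0 * p^-1).
have Eu1 : forall z i', u z (lift i0 i') = u' 0 i' by move=> z i'; rewrite mxE liftK.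
have Eu0 : forall z, u z i0 = - \sum_(i' < c.+1) u' 0 i' * al (lift i0 i') 0 * p^-1
  by move=> z; rewrite mxE unlift_none.
exists u, (lift i0 i0'); split; first by rewrite Eu1.
split.
  apply/matrixP => z j; rewrite (ord1 z) !mxE (split_sum_at i0) Eu0.
  have -> : \sum_(i < c.+1) u 0 (lift i0 i) * al (lift i0 i) j =
            \sum_(i < c.+1) u' 0 i * al (lift i0 i) j by apply: eq_bigr => i _; rewrite Eu1.
  case: (unliftP 0 j) => [j'|] ->.
    move/matrixP: Hu'al => /(_ 0 j'); rewrite !mxE.
    under eq_bigr do rewrite mxE mulrBr.
    rewrite sumrB => E; rewrite -[RHS]E addrC; congr (_ + _).
    rewrite mulNr mulr_suml; congr (- _); apply: eq_bigr => i' _.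
    by rewrite !mulrA.
  rewrite -/p mulNr mulr_suml; under eq_bigr do rewrite divrK //.
  by rewrite addNr.
move=> w Hw.
set w' : 'rV[A]_(c.+1) := \row_i' w 0 (lift i0 i').
have Ew0 : w 0 i0 = - \sum_(i' < c.+1) w' 0 i' * al (lift i0 i') 0 * p^-1.
  move/matrixP: Hw => /(_ 0 0); rewrite !mxE (split_sum_at i0) -/p.
  move/eqP; rewrite addr_eq0 => /eqP E.
  rewrite -[w 0 i0](mulrK Hp) E mulNr mulr_suml; congr (- _); apply: eq_bigr => i' _.
  by rewrite mxE.
have Hw' : w' *m al' = 0.
  apply/matrixP => z j'; rewrite (ord1 z) !mxE.
  move/matrixP: Hw => /(_ 0 (lift 0 j')); rewrite !mxE (split_sum_at i0) Ew0.
  under eq_bigr do rewrite mxE.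
  under [X in _ -> X = _]eq_bigr do rewrite mxE mxE mulrBr.
  move=> E; rewrite sumrB -[RHS]E addrC; congr (_ + _).
  rewrite mulNr mulr_suml; congr (- _); apply: eq_bigr => i' _.
  by rewrite !mulrA.
have [mu Hmu] := Hu'ann w' Hw'.
exists mu => i; case: (unliftP i0 i) => [i'|] ->.
  by rewrite Eu1 -Hmu mxE.
rewrite Ew0 Eu0 mulrN mulr_sumr; congr (- _); apply: eq_bigr => i' _.
by rewrite Hmu !mulrA.
Qed.

End Annih.
Section Ymap.
Variables (k : fieldType) (A : falgType k) (X : vectType k) (M : bimod A X).
Local Notation act := (act M).

Definition Ymap m d (u : 'rV[A]_m) (v : 'rV[k]_d) (Z : 'M[X]_(m, d)) : X :=
  \sum_(i < m) \sum_(j < d) v 0 j *: act (u 0 i) (Z i j).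

Lemma P1 m c d (u : 'rV[A]_m) (al : 'M[A]_(m, c)) (v : 'rV[k]_d) (H : 'M[X]_(c, d)) :
  u *m al = 0 ->
  \sum_(i < m) \sum_(j < d) v 0 j *: act (u 0 i) (\sum_(l < c) act (al i l) (H l j)) = 0.
Proof.
move=> Hu.
have E : forall j, \sum_(i < m) act (u 0 i) (\sum_(l < c) act (al i l) (H l j)) = 0.
  move=> j; under eq_bigr do rewrite act_sumr.
  rewrite exchange_big /=; apply: big1 => l _.
  under eq_bigr do rewrite -actM.
  rewrite -act_suml; have : (u *m al) 0 l = 0 by rewrite Hu mxE.
  by rewrite mxE => ->; exact: act0l.
by rewrite exchange_big /=; apply: big1 => j _; rewrite -scaler_sumr E scaler0.
Qed.

Lemma P2 m d (u : 'rV[A]_m) (K1 : 'M[k]_d) (v : 'rV[k]_d) (xi : 'M[X]_(m, d)) :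
  \sum_(i < m) \sum_(j < d) v 0 j *: act (u 0 i) (\sum_(l < d) K1 l j *: xi i l)
  = Ymap u (v *m K1^T) xi.
Proof.
rewrite /Ymap; apply: eq_bigr => i _.
under eq_bigr do rewrite act_sumr scaler_sumr.
rewrite exchange_big /=; apply: eq_bigr => l _.
rewrite mxE scaler_suml; apply: eq_bigr => j _.
by rewrite actZr scalerA mxE.
Qed.

Lemma P3 m d (u : 'rV[A]_m) (H0 : 'M[A]_m) (mu : A) (v : 'rV[k]_d) (xi : 'M[X]_(m, d)) :
  (forall l, (u *m H0) 0 l = mu * u 0 l) ->
  \sum_(i < m) \sum_(j < d) v 0 j *: act (u 0 i) (\sum_(l < m) act (H0 i l) (xi l j))
  = act mu (Ymap u v xi).
Proof.
move=> Hmu; rewrite /Ymap [RHS]act_sumr.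
under [RHS]eq_bigr do rewrite act_sumr.
rewrite exchange_big [RHS]exchange_big /=; apply: eq_bigr => j _.
rewrite -[LHS]scaler_sumr.
under [RHS]eq_bigr do rewrite actZr.
rewrite -[RHS]scaler_sumr; congr (_ *: _).
under eq_bigr do rewrite act_sumr.
rewrite exchange_big /=; apply: eq_bigr => l _.
under eq_bigr do rewrite -actM.
by rewrite -act_suml -actM; congr (act _ _); rewrite -Hmu mxE.
Qed.

Lemma P4 m b d (u : 'rV[A]_m) (ka : 'M[k]_(b, d)) (v : 'rV[k]_d) (H : 'M[X]_(m, b)) :
  v *m ka^T = 0 ->
  \sum_(i < m) \sum_(j < d) v 0 j *: act (u 0 i) (\sum_(l < b) ka l j *: H i l) = 0.
Proof.
move=> Hv; apply: big1 => i _.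
under eq_bigr do rewrite act_sumr scaler_sumr.
rewrite exchange_big /=; apply: big1 => l _.
under eq_bigr do rewrite actZr scalerA.
have E : \sum_j v 0 j * ka l j = (v *m ka^T) 0 l
  by rewrite mxE; apply: eq_bigr => j _; rewrite mxE.
by rewrite -scaler_suml E Hv mxE scale0r.
Qed.

Lemma Ylin m d s (u : 'rV[A]_m) (r : 'rV[k]_s) (B : 'M[k]_(s, d)) (xi : 'M[X]_(m, d)) :
  Ymap u (r *m B) xi = \sum_(l < s) r 0 l *: Ymap u (row l B) xi.
Proof.
rewrite /Ymap; under [RHS]eq_bigr do rewrite scaler_sumr.
rewrite [RHS]exchange_big /=; apply: eq_bigr => i _.
under [RHS]eq_bigr do rewrite scaler_sumr.
rewrite [RHS]exchange_big /=; apply: eq_bigr => j _.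
rewrite mxE scaler_suml; apply: eq_bigr => l _.
by rewrite mxE scalerA.
Qed.

End Ymap.
Section More.
Variables (k : fieldType) (A : falgType k) (X : vectType k) (M : bimod A X).
Local Notation act := (act M).

Lemma YF m d s (u : 'rV[A]_m) i0 (B : 'M[k]_(s, d)) (D : 'M[k]_(d, s)) (x : 'I_s -> X) mm :
  u 0 i0 \is a GRing.unit -> B *m D = 1%:M ->
  Ymap M u (row mm B) (\matrix_(i, j) (if i == i0 then act (u 0 i0)^-1 (\sum_(m' < s) D j m' *: x m') else 0))
  = x mm.
Proof.
move=> Hu BD; rewrite /Ymap (bigD1 i0) //= [X in _ + X]big1 ?addr0; last first.
  by move=> i /negbTE Hi; apply: big1 => j _; rewrite mxE Hi act0r scaler0.
under eq_bigr do rewrite mxE eqxx -actM divrr // act1 scaler_sumr.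
rewrite exchange_big /=.
have E : forall m', \sum_(j < d) row mm B 0 j *: (D j m' *: x m') = (1%:M : 'M[k]_s) mm m' *: x m'.
  by move=> m'; rewrite -BD mxE scaler_suml; apply: eq_bigr => j _; rewrite mxE scalerA.
under eq_bigr do rewrite E.
rewrite (bigD1 mm) //= big1 ?addr0 ?mxE ?eqxx ?scale1r //.
by move=> m' Hm'; rewrite mxE eq_sym (negbTE Hm') scale0r.
Qed.

Variable Hloc : local_res_field A.
Local Notation phi := (phi Hloc).

Lemma map_phiM m n p (P : 'M[A]_(m, n)) (Q : 'M[A]_(n, p)) :
  map_mx phi (P *m Q) = map_mx phi P *m map_mx phi Q.
Proof.
apply/matrixP => i j; rewrite !mxE phi_sum; apply: eq_bigr => l _.
by rewrite phiM !mxE.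
Qed.

Lemma map_phiD m n (P Q : 'M[A]_(m, n)) :
  map_mx phi (P + Q) = map_mx phi P + map_mx phi Q.
Proof. by apply/matrixP => i j; rewrite !mxE phiD. Qed.

Lemma map_phi_delta m n (i : 'I_m) (j : 'I_n) :
  map_mx phi (delta_mx i j) = delta_mx i j.
Proof.
apply/matrixP => i' j'; rewrite !mxE.
by case: (_ && _); rewrite ?phi1 ?phi0.
Qed.

End More.
From mathcomp Require Import zify.
Section Extract.
Variables (k : fieldType) (A : falgType k) (X : vectType k) (M : bimod A X).
Variable Hloc : local_res_field A.
Local Notation phi := (phi Hloc).
Local Notation act := (act M).

Definition minimal s (y : 'I_s -> X) :=
  forall x : 'I_s -> X, exists (mu : A) (L : 'M[k]_s),
    forall m, x m = \sum_(l < s) L m l *: y l + act mu (y m).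

Lemma Ysplit m d (u : 'rV[A]_m) (v : 'rV[k]_d) (F1 F2 F3 F4 : 'I_m -> 'I_d -> X) :
  \sum_(i < m) \sum_(j < d) v 0 j *: act (u 0 i) (F1 i j + F2 i j + (F3 i j + F4 i j)) =
  \sum_(i < m) \sum_(j < d) v 0 j *: act (u 0 i) (F1 i j)
  + \sum_(i < m) \sum_(j < d) v 0 j *: act (u 0 i) (F2 i j)
  + (\sum_(i < m) \sum_(j < d) v 0 j *: act (u 0 i) (F3 i j)
  + \sum_(i < m) \sum_(j < d) v 0 j *: act (u 0 i) (F4 i j)).
Proof.
rewrite -!big_split /=; apply: eq_bigr => i _.
rewrite -!big_split /=; apply: eq_bigr => j _.
by rewrite !actDr !scalerDr.
Qed.

Lemma Yhadd m n m' n' (f g : Defs.hom A X m n m' n') (u : 'rV[A]_m') (v : 'rV[k]_n) :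
  Ymap M u v (hX (hadd f g)) = Ymap M u v (hX f) + Ymap M u v (hX g).
Proof.
rewrite /Ymap /= -big_split; apply: eq_bigr => i _.
rewrite -big_split; apply: eq_bigr => j _.
by rewrite mxE actDr scalerDr.
Qed.

Lemma Yhcomp m n m' n' m'' n'' (g : Defs.hom A X m' n' m'' n'') (f : Defs.hom A X m n m' n')
  (u : 'rV[A]_m'') (v : 'rV[k]_n) :
  Ymap M u v (hX (hcomp M g f)) =
  \sum_(i < m'') \sum_(j < n) v 0 j *: act (u 0 i) (\sum_(l < m') act (hA g i l) (hX f l j))
  + \sum_(i < m'') \sum_(j < n) v 0 j *: act (u 0 i) (\sum_(l < n') hK f l j *: hX g i l).
Proof.
rewrite /Ymap /= -big_split; apply: eq_bigr => i _.
rewrite -big_split; apply: eq_bigr => j _.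
by rewrite mxE actDr scalerDr.
Qed.

Lemma extract (c b t : nat) (dT : Defs.hom A X c (b + t) c.+1 b) :
  (0 < t)%N -> presilting M (fun _ => True) dT ->
  exists s (y : 'I_s -> X), s = t /\ minimal y.
Proof.
move=> Ht [_ Hall].
have Hk : forall i j, exists (P : 'M[k]_(b + t)) (Q : 'M[k]_b),
    delta_mx i j = hK dT *m P + Q *m hK dT.
  move=> i j; have [h1 [h0 [_ [_ E]]]] := Hall (Defs.Hom 0 0 (delta_mx i j)) (fun _ _ => I).
  by exists (hK h1), (hK h0); have := congr1 (@hK _ _ _ _ _ _ _) E.
have [w0 [Hw0 Hkw]] : exists w0 : 'cV[k]_(b + t), w0 != 0 /\ hK dT *m w0 = 0.
  have : kermx (hK dT)^T != 0.
    rewrite -mxrank_eq0 mxrank_ker mxrank_tr; have := rank_leq_row (hK dT); lia.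
  move/matrix0Pn => [i [j Hij]]; exists (row i (kermx (hK dT)^T))^T; split.
    apply/eqP => /matrixP /(_ j 0) H.
    have E2 : (row i (kermx (hK dT)^T))^T j 0 = kermx (hK dT)^T i j by rewrite !mxE.
    by rewrite -E2 H mxE eqxx in Hij.
  have H : row i (kermx (hK dT)^T) *m (hK dT)^T = 0 by rewrite -row_mul mulmx_ker row0.
  by have := congr1 trmx H; rewrite trmx_mul trmxK trmx0.
have Hrk : \rank (hK dT) = b.
  have Hker : kermx (hK dT) = 0.
    apply/row_matrixP => i; rewrite row0.
    have Hr : row i (kermx (hK dT)) *m hK dT = 0 by rewrite -row_mul mulmx_ker row0.
    by case: (nogap Hr Hkw Hk) => // H; rewrite H eqxx in Hw0.
  have := mxrank_ker (hK dT); rewrite Hker mxrank0 => H.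
  have := rank_leq_row (hK dT); lia.
have Hs : \rank (kermx (hK dT)^T) = t by rewrite mxrank_ker mxrank_tr Hrk addKn.
have BK : row_base (kermx (hK dT)^T) *m (hK dT)^T = 0.
  by apply/sub_kermxP; rewrite eq_row_base submx_refl.
have [D BD] : exists D, row_base (kermx (hK dT)^T) *m D = 1%:M.
  by apply/row_freeP; exact: row_base_free.
have Ha : forall i j, exists (P : 'M[k]_c) (Q : 'M[k]_(c.+1)),
    delta_mx i j = map_mx phi (hA dT) *m P + Q *m map_mx phi (hA dT).
  move=> i j; have [h1 [h0 [_ [_ E]]]] := Hall (Defs.Hom (delta_mx i j) 0 0) (fun _ _ => I).
  exists (map_mx phi (hA h1)), (map_mx phi (hA h0)).
  have := congr1 (@hA _ _ _ _ _ _ _) E => /= E'.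
  by rewrite -(map_phi_delta Hloc) E' map_phiD !map_phiM.
have Hacol : forall w : 'cV[k]_c, map_mx phi (hA dT) *m w = 0 -> w = 0.
  have : kermx (map_mx phi (hA dT)) != 0.
    by rewrite -mxrank_eq0 mxrank_ker; have := rank_leq_col (map_mx phi (hA dT)); lia.
  move/matrix0Pn => [i [j Hij]] w Hw.
  have Hr : row i (kermx (map_mx phi (hA dT))) *m map_mx phi (hA dT) = 0
    by rewrite -row_mul mulmx_ker row0.
  case: (nogap Hr Hw Ha) => // H.
  have : row i (kermx (map_mx phi (hA dT))) 0 j = 0 by rewrite H mxE.
  by rewrite mxE => E; rewrite E eqxx in Hij.
have [u [i0 [Hu0 [Hual Hann]]]] := annih Hacol.
exists (\rank (kermx (hK dT)^T)), (fun m => Ymap M u (row m (row_base (kermx (hK dT)^T))) (hX dT)).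
split => // x.
have [h1 [h0 [_ [_ E]]]] := Hall (Defs.Hom 0 (\matrix_(i, j) (if i == i0 then
    act (u 0 i0)^-1 (\sum_(m' < \rank (kermx (hK dT)^T)) D j m' *: x m') else 0)) 0)
  (fun _ _ => I).
have EA := congr1 (@hA _ _ _ _ _ _ _) E; have EK := congr1 (@hK _ _ _ _ _ _ _) E.
have EX : \matrix_(i, j) (if i == i0 then
    act (u 0 i0)^-1 (\sum_(m' < \rank (kermx (hK dT)^T)) D j m' *: x m') else 0)
    = hX (hadd (hcomp M dT h1) (hcomp M h0 dT)) := congr1 (@hX _ _ _ _ _ _ _) E.
simpl in EA, EK.
have [mu Hmu] : exists mu, forall l, (u *m hA h0) 0 l = mu * u 0 l.
  apply: Hann; rewrite -mulmxA.
  have -> : hA h0 *m hA dT = - (hA dT *m hA h1).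
    by apply/eqP; rewrite -addr_eq0 addrC -EA.
  by rewrite mulmxN mulmxA Hual mul0mx oppr0.
have [L HL] : exists L, row_base (kermx (hK dT)^T) *m (hK h1)^T
                        = L *m row_base (kermx (hK dT)^T).
  apply/submxP; rewrite eq_row_base; apply/sub_kermxP.
  rewrite -mulmxA -trmx_mul.
  have -> : hK dT *m hK h1 = - (hK h0 *m hK dT) by apply/eqP; rewrite -addr_eq0 -EK.
  have TN : forall m n (Z : 'M[k]_(m, n)), (- Z)^T = - Z^T
    by move=> ? ? Z; apply/matrixP => i j; rewrite !mxE.
  by rewrite TN mulmxN trmx_mul mulmxA BK mul0mx oppr0.
exists mu, L => m.
rewrite -(YF M x m Hu0 BD) EX Yhadd !Yhcomp.
rewrite P1 // P2 (@P3 _ _ _ M _ _ _ _ _ _ _ Hmu) P4; last by rewrite -row_mul BK row0.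
rewrite add0r addr0 -row_mul HL row_mul Ylin; congr (_ + _).
by apply: eq_bigr => l _; rewrite mxE.
Qed.

End Extract.
Section Grp.
Variables (k : fieldType) (X : vectType k).
Lemma grp_id (a b m d e : X) (c : k) :
  (a + m) - ((b - c *: d) + (m - c *: - e)) = (a - b) - c *: (e - d).
Proof.
rewrite scalerN opprK scalerBr.
rewrite opprD opprB opprD addrA.
rewrite [a + m + _]addrC addrA addrA [_ + a]addrC -!addrA; congr (_ + _).
rewrite (addrA m) subrr add0r opprB addrC -addrA; congr (_ + _).
by rewrite addrC.
Qed.

Lemma phi_id (a s1 s2 : X) (c : k) : a + s1 - (s1 - c *: a) = (1 + c) *: a.
Proof. by rewrite opprB addrA addrAC addrK scalerDl scale1r. Qed.
End Grp.
Section PartB.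
Variables (k : fieldType) (A : falgType k) (X : vectType k) (M : bimod A X).
Variable Hloc : local_res_field A.
Local Notation phi := (phi Hloc).
Local Notation act := (act M).

Lemma zid (a s1 s2 : X) : a + s1 - (s1 - s2) = a + s2.
Proof. by rewrite opprB addrA addrAC addrK addrC. Qed.

Lemma partb_main t' (y : 'I_t'.+1 -> X) (p : 'I_t'.+1) (h : X)
  (Hh : forall x, exists a, x = act a h) (Hmin : minimal M y) (Hp : ~ JX M (y p)) :
  rigid M (JX M) 1 (1 - (t'.+1)%:Z).
Proof.
have [g Hg] : exists g : 'I_t'.+1 -> A, forall l, y l = act (g l) h.
  exists (fun l => proj1_sig (constructive_indefinite_description _ (Hh (y l)))).
  by move=> l; case: constructive_indefinite_description.
have Hcp : phi (g p) != 0.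
  apply/eqP => H0; apply: Hp; rewrite Hg; apply: JX_single; exact: jac_phi0.
set cf := fun l => phi (g l) / phi (g p).
set h' := fun j : 'I_t' => y (lift p j) - cf (lift p j) *: y p.
have Hh'J : forall j, JX M (h' j).
  move=> j; rewrite /h' !Hg -actZl -actBl; apply: JX_single; apply: jac_phi0.
  by rewrite phiB phiZ /cf divfK // subrr.
have HPhi : forall L : 'M[k]_t'.+1, forall q, exists beta : k,
    \sum_l L q l *: y l - \sum_(l' < t') L q (lift p l') *: h' l' = beta *: y p.
  move=> L q; exists (L q p + \sum_(l' < t') L q (lift p l') * cf (lift p l')).
  rewrite (split_sum_at p) /h'.
  under [X in _ - X = _]eq_bigr do rewrite scalerBr.
  rewrite sumrB zid scalerDl scaler_suml; congr (_ + _); apply: eq_bigr => l' _.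
  by rewrite scalerA.
pose dT : Defs.hom A X 0 t' 1 0 := Defs.Hom 0 (\matrix_(i, j) h' j) 0.
rewrite /rigid; exists 1%N, 0%N, 0%N, t', dT; split; first by [].
split; first by lia.
split.
  by move=> i j; rewrite mxE.
move=> f Hf.
pose z := fun i : 'I_t'.+1 => if unlift p i is Some j then hX f 0 j else 0.
have [mu [L HL]] := Hmin z.
have Hz1 : forall j, hX f 0 j = \sum_l L (lift p j) l *: y l + act mu (y (lift p j)).
  by move=> j; rewrite -HL /z liftK.
have Hz0 : act mu (y p) = - \sum_l L p l *: y l.
  apply/eqP; rewrite -addr_eq0 addrC; apply/eqP.
  by rewrite -HL /z unlift_none.
pose K1 : 'M[k]_t' := \matrix_(l, j) (L (lift p j) (lift p l) - cf (lift p j) * L p (lift p l)).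
have Key : forall j, hX f 0 j = \sum_l K1 l j *: h' l + act mu (h' j).
  move=> j; apply/eqP; rewrite -subr_eq0; apply/eqP.
  set r := _ - _.
  have [gam Hgam] : exists gam : k, r = gam *: y p.
    have [b1 Hb1] := HPhi L (lift p j); have [b2 Hb2] := HPhi L p.
    exists (b1 - cf (lift p j) * b2).
    rewrite scalerBl -scalerA -Hb1 -Hb2 /r Hz1.
    have -> : act mu (h' j) = act mu (y (lift p j)) - cf (lift p j) *: act mu (y p)
      by rewrite /h' actBr actZr.
    have -> : \sum_l K1 l j *: h' l = \sum_(l < t') L (lift p j) (lift p l) *: h' l
            - cf (lift p j) *: \sum_(l < t') L p (lift p l) *: h' l.
      rewrite scaler_sumr -sumrB; apply: eq_bigr => l _.
      by rewrite mxE scalerBl scalerA.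
    by rewrite Hz0 grp_id.
  have HrJ : JX M r.
    apply: JXB; first exact: Hf.
    apply: JXD; last exact: JXact.
    by apply: JX_sum => l; apply: JXZ.
  case: (eqVneq gam 0) => [H0|Hne]; first by rewrite Hgam H0 scale0r.
  exfalso; apply: Hp.
  have -> : y p = gam^-1 *: r by rewrite Hgam scalerA mulVf ?scale1r.
  exact: JXZ.
exists (Defs.Hom 0 0 K1), (Defs.Hom (const_mx mu) 0 0).
split; first by move=> [].
split; first by move=> i [].
case: f Hf z HL Hz1 Hz0 Key => fA fX fK /= Hf z HL Hz1 Hz0 Key.
rewrite /dT /hadd /hcomp /=; congr Defs.Hom.
- by apply/matrixP => i [].
- apply/matrixP => i j; rewrite (ord1 i) Key !mxE big_ord0 add0r big_ord1 big_ord0 addr0.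
  by congr (_ + _); [apply: eq_bigr => l _; rewrite !mxE | rewrite !mxE].
- by apply/matrixP => [[]].
Qed.

End PartB.
Section Triv.
Variables (k : fieldType) (A : falgType k) (X : vectType k) (M : bimod A X).

Lemma partb_triv t' (Hz : forall x : X, x = 0) : rigid M (JX M) 1 (1 - (t'.+1)%:Z).
Proof.
pose dT : Defs.hom A X 0 t' 1 0 := Defs.Hom 0 0 0.
rewrite /rigid; exists 1%N, 0%N, 0%N, t', dT; split; first by [].
split; first by lia.
split; first by move=> i j; rewrite mxE; exact: JX0.
move=> f Hf; exists (Defs.Hom 0 0 0), (Defs.Hom 0 0 0).
split; first by move=> [].
split; first by move=> i [].
case: f Hf => fA fX fK /= Hf.
rewrite /dT /hadd /hcomp /=; congr Defs.Hom.
- by apply/matrixP => i [].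
- by apply/matrixP => i j; rewrite (Hz (fX i j)) (Hz (_ i j)).
- by apply/matrixP => [[]].
Qed.

End Triv.

Unset Implicit Arguments.

Theorem lemma3p15 (k : fieldType) (A : falgType k) (X : vectType k)
  (M : bimod A X) (Hloc : local_res_field A)
  (Hrig : rigid M (fun _ => True) 1 (-1)) :
  (exists h : X, forall x : X, exists a : A, x = act M a h) /\
  (forall t : nat, (1 <= t)%N ->
     rigid M (fun _ => True) 1 (- t%:Z) ->
     rigid M (JX M) 1 (1 - t%:Z)).
Proof.
have Ha : exists h : X, forall x : X, exists a : A, x = act M a h.
  case: Hrig => a [b [c [d [dT [Hac [Hbd Hpre]]]]]].
  have Ea : a = c.+1 by lia.
  have Ed : d = (b + 1)%N by lia.
  subst a d.
  have [s [y [Hs Hm]]] := extract Hloc (isT : (0 < 1)%N) Hpre.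
  subst s; exists (y 0) => x.
  have [mu [L HL]] := Hm (fun _ => x).
  exists ((L 0 0)%:A + mu).
  by have := HL 0 => /= ->; rewrite big_ord1 actDl act_alg.
split => // t Ht Hrig2.
case: t Ht Hrig2 => [//|t'] Ht Hrig2.
case: Hrig2 => a [b [c [d [dT [Hac [Hbd Hpre]]]]]].
have Ea : a = c.+1 by lia.
have Ed : d = (b + t'.+1)%N by lia.
subst a d.
have [s [y [Hs Hm]]] := extract Hloc Ht Hpre.
subst s.
have [h Hh] := Ha.
case: (classic (exists p, ~ JX M (y p))) => [[p Hp]|Hall].
  exact (partb_main Hloc Hh Hm Hp).
apply: partb_triv.
have HyJ : forall l, JX M (y l).
  by move=> l; apply: NNPP => H; apply: Hall; exists l.
have HhJ : JX M h.
  have [mu [L HL]] := Hm (fun _ => h).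
  have := HL 0 => /= ->.
  apply: JXD; last exact: JXact.
  by apply: JX_sum => l; apply: JXZ.
have [j [Hj Ej]] := JX_cyclic Hh HhJ.
have h0 : h = 0.
  have E1 : act M (1 - j) h = 0 by rewrite actBl act1 -Ej subrr.
  have Hu := jac_unit Hj.
  by rewrite -(act1 M h) -(mulVr Hu) actM E1 act0r.
by move=> x; have [a ->] := Hh x; rewrite h0 act0r.
Qed.
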